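(* Let $\alpha>1$, let $X=\{x_j:j\in J\}\subset\mathbb{R}^2$ be finite with $n=|J|$, and suppose the $1$-centre $C$ of $X$ is equidistant from all points of $X$. Then $s_\alpha^*=C$ if and only if $C\in\mathrm{conv}(\{M_j(C):j\in J\})$.
   Context: $s_\alpha^*$ is the unique minimiser of $P_\alpha(s,X)=\sum_{j\in J}\|s-x_j\|^\alpha+\max_{j\in J}\|s-x_j\|^\alpha$. $C$ is the centre of the minimum enclosing circle of $X$. For a point $s$, $x_j(s)=s+\|s-x_j\|^{\alpha-2}(x_j-s)$ (so $\|x_j(s)-s\|=\|x_j-s\|^{\alpha-1}$), and $M_j(s)=\frac{1}{n+1}\big(x_j(s)+\sum_{i\in J}x_i(s)\big)$. *)

(* Defs.v *)
From HB Require Import structures.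
From mathcomp Require Import all_boot all_order all_algebra.
From mathcomp Require Import reals exp.
Set Implicit Arguments. Unset Strict Implicit. Unset Printing Implicit Defensive.
Import Order.TTheory GRing.Theory Num.Theory.
Local Open Scope ring_scope.

Definition pt (R : realType) := 'rV[R]_2.

Definition enorm (R : realType) (v : pt R) : R :=
  Num.sqrt (v ord0 ord0 ^+ 2 + v ord0 (Ordinal (isT : (1 < 2)%N)) ^+ 2).

Definition edist (R : realType) (p q : pt R) : R := enorm (p - q).

(* max_{j in J} of a nonnegative quantity (J = 'I_n nonempty in use). *)
Definition maxd (R : realType) (n : nat) (f : 'I_n -> R) : R :=
  \big[Num.max/0]_(j < n) f j.

Definition Palpha (R : realType) (n : nat) (alpha : R) (x : 'I_n -> pt R)
    (s : pt R) : R :=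
  \sum_(j < n) powR (edist s (x j)) alpha
  + maxd (fun j => powR (edist s (x j)) alpha).

Definition unique_minimiser (R : realType) (n : nat) (alpha : R)
    (x : 'I_n -> pt R) (s : pt R) : Prop :=
  (forall t, Palpha alpha x s <= Palpha alpha x t) /\
  (forall t, (forall u, Palpha alpha x t <= Palpha alpha x u) -> t = s).

Definition is_one_centre (R : realType) (n : nat) (x : 'I_n -> pt R)
    (C : pt R) : Prop :=
  forall s, maxd (fun j => edist C (x j)) <= maxd (fun j => edist s (x j)).

Definition xs (R : realType) (n : nat) (alpha : R) (x : 'I_n -> pt R)
    (s : pt R) (j : 'I_n) : pt R :=
  s + powR (edist s (x j)) (alpha - 2) *: (x j - s).

Definition Mj (R : realType) (n : nat) (alpha : R) (x : 'I_n -> pt R)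
    (s : pt R) (j : 'I_n) : pt R :=
  (n.+1%:R)^-1 *: (xs alpha x s j + \sum_(i < n) xs alpha x s i).

Definition in_conv (R : realType) (n : nat) (p : 'I_n -> pt R) (c : pt R) : Prop :=
  exists lam : 'I_n -> R,
    (forall j, 0 <= lam j) /\ \sum_(j < n) lam j = 1 /\
    c = \sum_(j < n) lam j *: p j.

(* Main.v *)
From HB Require Import structures.
From mathcomp Require Import all_boot all_order all_algebra.
From mathcomp Require Import boolp classical_sets filter reals topology normedtype derive exp.
From mathcomp Require Import ring lra functions.
Require Import Defs.
Import Order.TTheory GRing.Theory Num.Theory.
Import numFieldNormedType.Exports.
Set Implicit Arguments. Unset Strict Implicit. Unset Printing Implicit Defensive.
Local Open Scope classical_set_scope.
Local Open Scope ring_scope.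

Definition i1 : 'I_2 := Ordinal (isT : (1 < 2)%N).
Definition c0 (R : realType) (v : pt R) : R := v ord0 ord0.
Definition c1 (R : realType) (v : pt R) : R := v ord0 i1.
Definition dot (R : realType) (u v : pt R) : R := c0 u * c0 v + c1 u * c1 v.

Lemma enormE (R : realType) (v : pt R) : enorm v = Num.sqrt (c0 v ^+ 2 + c1 v ^+ 2).
Proof. by []. Qed.

Lemma c0D (R : realType) (u v : pt R) : c0 (u + v) = c0 u + c0 v.
Proof. by rewrite /c0 mxE. Qed.
Lemma c1D (R : realType) (u v : pt R) : c1 (u + v) = c1 u + c1 v.
Proof. by rewrite /c1 mxE. Qed.
Lemma c0N (R : realType) (u : pt R) : c0 (- u) = - c0 u.
Proof. by rewrite /c0 mxE. Qed.
Lemma c1N (R : realType) (u : pt R) : c1 (- u) = - c1 u.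
Proof. by rewrite /c1 mxE. Qed.
Lemma c0B (R : realType) (u v : pt R) : c0 (u - v) = c0 u - c0 v.
Proof. by rewrite c0D c0N. Qed.
Lemma c1B (R : realType) (u v : pt R) : c1 (u - v) = c1 u - c1 v.
Proof. by rewrite c1D c1N. Qed.
Lemma c0Z (R : realType) (k : R) (u : pt R) : c0 (k *: u) = k * c0 u.
Proof. by rewrite /c0 mxE. Qed.
Lemma c1Z (R : realType) (k : R) (u : pt R) : c1 (k *: u) = k * c1 u.
Proof. by rewrite /c1 mxE. Qed.
Lemma c0_sum (R : realType) n (f : 'I_n -> pt R) : c0 (\sum_(i < n) f i) = \sum_(i < n) c0 (f i).
Proof. by rewrite /c0 summxE. Qed.
Lemma c1_sum (R : realType) n (f : 'I_n -> pt R) : c1 (\sum_(i < n) f i) = \sum_(i < n) c1 (f i).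
Proof. by rewrite /c1 summxE. Qed.
Lemma c00 (R : realType) : c0 (0 : pt R) = 0.
Proof. by rewrite /c0 mxE. Qed.
Lemma c10 (R : realType) : c1 (0 : pt R) = 0.
Proof. by rewrite /c1 mxE. Qed.

Definition cE := (c0D, c1D, c0N, c1N, c0Z, c1Z, c0_sum, c1_sum, c00, c10).

Lemma pt_eq (R : realType) (u v : pt R) : c0 u = c0 v -> c1 u = c1 v -> u = v.
Proof.
move=> h0 h1; apply/rowP => -[[|[|//]]] Hi.
  by rewrite (_ : Ordinal Hi = ord0) //; apply: val_inj.
by rewrite (_ : Ordinal Hi = i1) //; apply: val_inj.
Qed.

Lemma dot_suml (R : realType) n (f : 'I_n -> pt R) u :
  dot (\sum_(i < n) f i) u = \sum_(i < n) dot (f i) u.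
Proof. by rewrite /dot c0_sum c1_sum !mulr_suml -big_split. Qed.

Lemma dot_sumr (R : realType) n (f : 'I_n -> pt R) u :
  dot u (\sum_(i < n) f i) = \sum_(i < n) dot u (f i).
Proof. by rewrite /dot c0_sum c1_sum !mulr_sumr -big_split. Qed.

Lemma cs (R : realType) (e y : pt R) : - dot e y <= enorm e * enorm y.
Proof.
rewrite !enormE -sqrtrM; last by rewrite addr_ge0 // sqr_ge0.
have [h|h] := leP 0 (dot e y).
  by apply: le_trans (sqrtr_ge0 _); rewrite oppr_le0.
rewrite -[X in X <= _]ger0_norm; last by rewrite oppr_ge0 ltW.
rewrite -sqrtr_sqr ler_sqrt; last by rewrite mulr_ge0 // addr_ge0 // sqr_ge0.
rewrite /dot; set a := c0 e; set b := c1 e; set c := c0 y; set d := c1 y.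
have : 0 <= (a * d - b * c) ^+ 2 by apply: sqr_ge0.
by move=> H; nra.
Qed.

Lemma bern (R : realType) (a b al : R) : 0 < a -> 0 <= b -> 1 < al ->
  al * (a `^ (al - 1) * b) <= b `^ al + (al - 1) * a `^ al.
Proof.
move=> a0 b0 al1.
have al0 : 0 < al by lra.
have q0 : 0 < al / (al - 1) by apply: divr_gt0; lra.
have pq : al^-1 + (al / (al - 1))^-1 = 1.
  by rewrite invf_div; field; lra.
have := conjugate_powR (a := b / a) (b := 1) (divr_ge0 b0 (ltW a0)) ler01 al0 q0 pq.
rewrite powR1 mulr1 powRM //; last by rewrite invr_ge0 ltW.
have -> : a^-1 `^ al = (a `^ al)^-1.
  by rewrite -powR_inv1 ?(ltW a0) // -powRrM mulN1r powRN.
have hA : a `^ al = a * a `^ (al - 1) by rewrite mulr_powRB1 // ltW.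
have B0 : 0 < a `^ (al - 1) by apply: powR_gt0.
rewrite hA invf_div => H.
set B := a `^ (al - 1) in B0 hA H *; set P := b `^ al in H *.
have aB0 : 0 < a * B by apply: mulr_gt0.
have := ler_wpM2l (ltW (mulr_gt0 al0 aB0)) H.
move=> H2.
have e1 : al * (a * B) * (b / a) = al * (B * b) by field; lra.
have e2 : al * (a * B) * (P / (a * B) / al + 1 * ((al - 1) / al)) = P + (al - 1) * (a * B).
  by field; apply/andP; split; lra.
by rewrite -e1 -e2.
Qed.

Lemma tangent (R : realType) (e u : pt R) (a al : R) : 0 < a -> enorm e = a -> 1 < al ->
  a `^ al - al * a `^ (al - 2) * dot e u <= enorm (u - e) `^ al.
Proof.
move=> a0 ea al1.
have ee : dot e e = a ^+ 2.
  rewrite -ea enormE sqr_sqrtr; last by rewrite addr_ge0 // sqr_ge0.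
  by rewrite /dot !expr2.
have hu : dot e u = dot e (u - e) + dot e e by rewrite /dot !cE; ring.
have := cs e (u - e); rewrite ea => hcs.
set b := enorm (u - e) in hcs *.
have b0 : 0 <= b by apply: sqrtr_ge0.
have hb := bern a0 b0 al1.
have B2 : 0 < a `^ (al - 2) by apply: powR_gt0.
have h1 : a * a `^ (al - 2) = a `^ (al - 1).
  by rewrite (_ : al - 2 = al - 1 - 1); [rewrite mulr_powRB1 // ?ltW //; lra | ring].
have h2 : a * a `^ (al - 1) = a `^ al by rewrite mulr_powRB1 // ?ltW //; lra.
rewrite hu ee.
set P2 := a `^ (al - 2) in B2 h1 *; set P1 := a `^ (al - 1) in h1 h2 hb *.
set A := a `^ al in h2 hb *; set D := dot e (u - e) in hcs *.
have hc := ler_wpM2l (ltW B2) hcs.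
have al0 : 0 <= al by lra.
have := ler_wpM2l al0 hc.
rewrite -h2 -h1 in hb *.
move=> H; nra.
Qed.

Lemma le_maxd (R : realType) n (f : 'I_n -> R) j : f j <= maxd f.
Proof. by rewrite /maxd (bigD1 j) //= le_max lexx. Qed.

Lemma maxd_le (R : realType) n (f : 'I_n -> R) c : 0 <= c -> (forall j, f j <= c) -> maxd f <= c.
Proof.
move=> c0 h; rewrite /maxd; apply: (big_ind (fun v => v <= c)) => //.
by move=> x y hx hy; rewrite ge_max hx hy.
Qed.

Lemma maxd_lt (R : realType) n (f : 'I_n -> R) c : 0 < c -> (forall j, f j < c) -> maxd f < c.
Proof.
move=> c0 h; rewrite /maxd; apply: (big_ind (fun v => v < c)) => //.
by move=> x y hx hy; rewrite gt_max hx hy.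
Qed.

Lemma maxd_conv (R : realType) n (f : 'I_n -> R) (lam : 'I_n -> R) :
  (forall j, 0 <= lam j) -> \sum_(j < n) lam j = 1 -> \sum_(j < n) lam j * f j <= maxd f.
Proof.
move=> l0 l1; apply: (@le_trans _ _ (\sum_(j < n) lam j * maxd f)).
  by apply: ler_sum => j _; apply: ler_wpM2l => //; apply: le_maxd.
by rewrite -mulr_suml l1 mul1r.
Qed.

Lemma ex_upper (R : realType) n (g : 'I_n -> R) : exists t, forall i, g i < t.
Proof.
exists (1 + \sum_(i < n) `|g i|) => i.
apply: (@le_lt_trans _ _ (\sum_(i < n) `|g i|)); last by lra.
apply: le_trans (ler_norm _) _.
rewrite (bigD1 i) //= ler_wpDr //; exact: sumr_ge0.
Qed.

Lemma sep (R : realType) n (g : 'I_n -> R) T : (forall i, g i < T) ->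
  exists t, (forall i, g i < t) /\ t < T.
Proof.
move=> h; set m := \big[Num.max/(T - 1)]_(i < n) g i.
have hm : m < T.
  rewrite /m; apply: (big_ind (fun v => v < T)) => //; first by lra.
  by move=> x y hx hy; rewrite gt_max hx hy.
have hg : forall i, g i <= m by move=> i; rewrite /m (bigD1 i) //= le_max lexx.
exists ((m + T) / 2); split; last by lra.
by move=> i; have := hg i; lra.
Qed.

Lemma dotDZl (R : realType) (s t : R) (d d' v : pt R) :
  dot (s *: d + t *: d') v = s * dot d v + t * dot d' v.
Proof. by rewrite /dot !cE; ring. Qed.

Lemma dotDZr (R : realType) (s t : R) (d d' v : pt R) :
  dot v (s *: d + t *: d') = s * dot v d + t * dot v d'.
Proof. by rewrite /dot !cE; ring. Qed.

Definition ext (R : realType) n (lam : 'I_n -> R) (c : R) (j : 'I_n.+1) : R :=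
  if unlift ord_max j is Some i then lam i else c.

Lemma ext_w (R : realType) n (lam : 'I_n -> R) c i :
  ext lam c (widen_ord (leqnSn n) i) = lam i.
Proof.
rewrite /ext (_ : widen_ord _ i = lift ord_max i) ?liftK //.
by apply: val_inj; exact: (esym (lift_max i)).
Qed.

Lemma ext_max (R : realType) n (lam : 'I_n -> R) c : ext lam c ord_max = c.
Proof. by rewrite /ext unlift_none. Qed.

Lemma w_lift (n : nat) (i : 'I_n) : widen_ord (leqnSn n) i = lift ord_max i.
Proof. by apply: val_inj; exact: (esym (lift_max i)). Qed.

Definition cc (R : realType) (k : 'I_2) (v : pt R) : R := v ord0 k.
Lemma ccD (R : realType) k (u v : pt R) : cc k (u + v) = cc k u + cc k v.
Proof. by rewrite /cc mxE. Qed.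
Lemma ccZ (R : realType) k (a : R) (v : pt R) : cc k (a *: v) = a * cc k v.
Proof. by rewrite /cc mxE. Qed.
Lemma cc_sum (R : realType) k n (f : 'I_n -> pt R) : cc k (\sum_(i < n) f i) = \sum_(i < n) cc k (f i).
Proof. by rewrite /cc summxE. Qed.
Lemma cc0 (R : realType) k : cc k (0 : pt R) = 0.
Proof. by rewrite /cc mxE. Qed.
Lemma pt_eqk (R : realType) (u v : pt R) : (forall k, cc k u = cc k v) -> u = v.
Proof. by move=> h; apply: pt_eq; [exact: (h ord0) | exact: (h i1)]. Qed.

Lemma sum_lift (V : zmodType) n (F : 'I_n.+1 -> V) :
  \sum_(j < n.+1) F j = \sum_(i < n) F (lift ord_max i) + F ord_max.
Proof. by rewrite big_ord_recr /=; congr (_ + _); apply: eq_bigr => i _; rewrite w_lift. Qed.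

Lemma ext_lift (R : realType) n (lam : 'I_n -> R) c i : ext lam c (lift ord_max i) = lam i.
Proof. by rewrite /ext liftK. Qed.

Lemma dot_pos (R : realType) (v : pt R) : v != 0 -> 0 < dot v v.
Proof.
move=> vnz; rewrite lt_def; apply/andP; split; last first.
  by rewrite /dot addr_ge0 // -expr2 sqr_ge0.
apply/negP => /eqP H; move/eqP: vnz; apply.
move: H; rewrite /dot -!expr2 => /eqP; rewrite paddr_eq0 ?sqr_ge0 // !sqrf_eq0 => /andP[/eqP h0 /eqP h1].
by apply: pt_eq; rewrite ?c00 ?c10.
Qed.

Lemma gordan (R : realType) n (w : 'I_n -> pt R) :
  (exists lam : 'I_n -> R, (forall j, 0 <= lam j) /\ \sum_(j < n) lam j = 1 /\
     \sum_(j < n) lam j *: w j = 0)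
  \/ (exists d, forall j, 0 < dot d (w j)).
Proof.
elim: n w => [|n IH] w; first by right; exists 0 => -[].
pose w' (i : 'I_n) := w (lift ord_max i); set wl := w ord_max.
have hall : forall P : 'I_n.+1 -> Prop, (forall i, P (lift ord_max i)) -> P ord_max -> forall j, P j.
  by move=> P h1 h2 j; case: (unliftP ord_max j) => [i ->|->].
case: (IH w') => [[lam [l0 [l1 l2]]]|[d hd]].
  left; exists (ext lam 0); split; first by apply: hall => [i|]; rewrite ?ext_lift ?ext_max.
  split; first by rewrite sum_lift (eq_bigr lam) ?ext_max ?addr0 // => i _; rewrite ext_lift.
  rewrite sum_lift (eq_bigr (fun i => lam i *: w' i)); last by move=> i _; rewrite ext_lift.
  by rewrite l2 ext_max scale0r addr0.
have [hdl|hdl] := ltP 0 (dot d wl).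
  by right; exists d; apply: hall => // i; exact: hd.
have [b0|bpos] := eqVneq (dot d wl) 0.
  have [wl0|wlnz] := eqVneq wl 0.
    left; exists (ext (fun=> 0) 1); split; first by apply: hall => [i|]; rewrite ?ext_lift ?ext_max.
    split; first by rewrite sum_lift big1 ?ext_max ?add0r // => i _; rewrite ext_lift.
    rewrite sum_lift big1; last by move=> i _; rewrite ext_lift scale0r.
    by rewrite ext_max add0r -/wl wl0 scaler0.
  right; have [t ht] := ex_upper (fun i => - dot wl (w' i) / dot d (w' i)).
  exists (t *: d + 1 *: wl); apply: hall => [i|].
    rewrite dotDZl mul1r; have := ht i; rewrite /= ltr_pdivrMr; last exact: hd.
    by rewrite -/(w' i); lra.
  by rewrite dotDZl b0 mulr0 add0r mul1r; apply: dot_pos.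
set b := - dot d wl.
have bp : 0 < b by rewrite /b oppr_gt0 lt_neqAle bpos hdl.
pose u i := dot d (w' i) *: wl + b *: w' i.
case: (IH u) => [[mu [m0 [m1 m2]]]|[d' hd']].
  left; set A := \sum_(i < n) mu i * dot d (w' i).
  have A0 : 0 <= A by apply: sumr_ge0 => i _; apply: mulr_ge0 => //; apply: ltW.
  have Ab : 0 < A + b by lra.
  exists (ext (fun i => b * mu i / (A + b)) (A / (A + b))).
  split; first apply: hall => [i|]; rewrite ?ext_lift ?ext_max.
      by apply: divr_ge0; [apply: mulr_ge0 => //; apply: ltW | apply: ltW].
    by apply: divr_ge0 => //; apply: ltW.
  split.
    rewrite sum_lift (eq_bigr (fun i => b * mu i / (A + b))); last by move=> i _; rewrite ext_lift.
    rewrite ext_max -mulr_suml -mulr_sumr m1; field; lra.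
  apply: pt_eqk => k; have H := congr1 (cc k) m2; move: H.
  rewrite cc0 !cc_sum => H; rewrite sum_lift ext_max.
  rewrite (eq_bigr (fun i => b * mu i / (A + b) * cc k (w' i))); last first.
    by move=> i _; rewrite ccZ ext_lift.
  move: H; rewrite (eq_bigr (fun i => mu i * dot d (w' i) * cc k wl + b * (mu i * cc k (w' i)))); last first.
    by move=> i _; rewrite /u !ccZ ccD !ccZ; ring.
  rewrite big_split /= -mulr_suml -/A -mulr_sumr => H.
  rewrite ccZ.
  have -> : \sum_(i < n) b * mu i / (A + b) * cc k (w' i) = b / (A + b) * \sum_(i < n) mu i * cc k (w' i).
    by rewrite mulr_sumr; apply: eq_bigr => i _; field; lra.
  set S := \sum_(i < n) mu i * cc k (w' i) in H *.
  have -> : b / (A + b) * S + A / (A + b) * cc k wl = (A * cc k wl + b * S) / (A + b) by field; lra.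
  by rewrite H mul0r.
have hs : forall i, (fun i => - (b * dot d' (w' i)) / dot d (w' i)) i < dot d' wl.
  move=> i; rewrite /= ltr_pdivrMr; last exact: hd.
  have := hd' i; rewrite /u dotDZr => H; have := hd i; nra.
have [t [ht1 ht2]] := sep hs.
right; exists (b *: d' + t *: d); apply: hall => [i|].
  rewrite dotDZl; have := ht1 i; rewrite /= ltr_pdivrMr; last exact: hd.
  by rewrite -/(w' i); lra.
rewrite dotDZl -/wl (_ : dot d wl = - b); last by rewrite /b opprK.
nra.
Qed.

Lemma deriv_powR_comp (R : realType) (Q : R -> R) (x dQ be : R) :
  is_derive x 1 Q dQ -> 0 < Q x ->
  is_derive x 1 (fun h => Q h `^ be) (be * Q x `^ (be - 1) * dQ).
Proof.
move=> hQ hQx; have dpow := is_derive1_powR be hQx.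
have d1 : derivable Q x 1 by exact: ex_derive.
have d2 : derivable (fun y : R => y `^ be) (Q x) 1 by exact: (ex_derive (is_derive := dpow)).
split.
  apply/derivable1_diffP.
  apply: (@differentiable_comp _ _ _ _ Q (fun y : R => y `^ be)); apply/derivable1_diffP => //.
rewrite -derive1E (derive1_comp d1 d2) !derive1E !derive_val.
by rewrite mulrC.
Qed.

Lemma eventually_dec (R : realType) (psi : R -> R) (L : R) :
  is_derive (0:R) 1 psi L -> L < 0 -> \forall h \near 0^'+, psi h < psi 0.
Proof.
case=> dpsi dval L0.
rewrite /derivable in dpsi; rewrite /derive in dval; rewrite dval in dpsi.
have := cvgr_lt L dpsi 0 L0.
rewrite !near_withinE => H; have {}H := H (dnbhs_filter _).
apply: filterS H => h /= H hpos.
have hq := H (lt0r_neq0 hpos).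
move: hq; rewrite /= scaler1 addr0 /GRing.scale /=.
by rewrite pmulr_rlt0 ?invr_gt0 // subr_lt0.
Qed.

Lemma powR_sqrt (R : realType) (q al : R) : 0 <= q -> (Num.sqrt q) `^ al = q `^ (2^-1 * al).
Proof. by move=> q0; rewrite -powR12_sqrt // -powRrM. Qed.

Lemma dotDr (R : realType) (u v w : pt R) : dot u (v + w) = dot u v + dot u w.
Proof. by rewrite /dot !cE; ring. Qed.

Lemma descent (R : realType) n (al r : R) (x : 'I_n -> pt R) (C d : pt R) :
  (0 < n)%N -> 1 < al -> 0 < r -> (forall j, edist C (x j) = r) ->
  (forall j, 0 < dot d (x j - C + \sum_(i < n) (x i - C))) ->
  exists t, Palpha al x t < Palpha al x C.
Proof.
move=> n0 al1 r0 hr hd.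
set be := 2^-1 * al.
pose Q (i : 'I_n) (h : R) := (c0 (C - x i) + h * c0 d) ^+ 2 + (c1 (C - x i) + h * c1 d) ^+ 2.
pose G (i : 'I_n) (h : R) := Q i h `^ be.
have hG : forall i h, powR (edist (C + h *: d) (x i)) al = G i h.
  move=> i h; rewrite /G /Q /edist enormE powR_sqrt; last by rewrite addr_ge0 // sqr_ge0.
  by congr (_ `^ _); rewrite !cE; ring.
have Q0 : forall i, Q i 0 = r ^+ 2.
  move=> i; rewrite /Q !mul0r !addr0 -(hr i) /edist enormE sqr_sqrtr //.
  by rewrite addr_ge0 // sqr_ge0.
have dQ : forall i, is_derive (0:R) 1 (Q i) (2 * dot (C - x i) d).
  move=> i; apply: is_derive_eq.
  rewrite !(mul0r, addr0, add0r, scale0r, scaler0, mul1r) /dot !cE !scaler1 /GRing.scale /=; ring.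
have r2 : 0 < r ^+ 2 by apply: exprn_gt0.
set c := be * (r ^+ 2) `^ (be - 1).
have cpos : 0 < c by apply: mulr_gt0; [rewrite /be; lra | apply: powR_gt0].
have dG : forall i, is_derive (0:R) 1 (G i) (c * (2 * dot (C - x i) d)).
  move=> i; rewrite /c -(Q0 i); apply: (@deriv_powR_comp R (Q i)).
  by rewrite Q0.
have key : forall j, \forall h \near 0^'+, ((\sum_(i < n) G i) + G j) h < ((\sum_(i < n) G i) + G j) 0.
  move=> j; apply: (eventually_dec (L := \sum_(i < n) (c * (2 * dot (C - x i) d)) + c * (2 * dot (C - x j) d))).
  have e1 : forall i, c * (2 * dot (C - x i) d) = - (2 * c) * dot d (x i - C).
    by move=> i; rewrite /dot !cE; ring.
  rewrite (eq_bigr _ (fun i _ => e1 i)) e1 -mulr_sumr -mulrDr mulNr oppr_lt0.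
  apply: mulr_gt0; first lra.
  have := hd j; rewrite dotDr dot_sumr addrC.
  by rewrite (eq_bigr (fun i => dot d (x i - C))).
have := @filter_forall _ _ _ _ _ key.
move=> /(_ (at_right_proper_filter 0)) H.
have [h [hpos hh]] := filter_ex (F := 0^'+) (filterI (nbhs_right_gt 0) H).
have hs : forall j, \sum_(i < n) G i h + G j h < \sum_(i < n) G i 0 + G j 0.
  move=> j; have := hh j; rewrite /= !fct_sumE //.
exists (C + h *: d); rewrite /Palpha.
have C0 : C + (0:R) *: d = C by rewrite scale0r addr0.
have e1 : (fun j => edist (C + h *: d) (x j) `^ al) = G ^~ h by apply/funext => j; rewrite hG.
have eC : (fun j => edist C (x j) `^ al) = G ^~ 0.
  by apply/funext => j /=; rewrite -(hG j 0) C0.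
have eS1 : \sum_(j < n) edist (C + h *: d) (x j) `^ al = \sum_(j < n) G j h.
  by apply: eq_bigr => j _; rewrite hG.
have eS2 : \sum_(j < n) edist C (x j) `^ al = \sum_(j < n) G j 0.
  by apply: eq_bigr => j _; rewrite -(hG j 0) C0.
rewrite eS1 eS2.
rewrite e1 eC.
set cc1 := \sum_(i < n) G i 0 + maxd (G ^~ 0) - \sum_(i < n) G i h.
have hj : forall j, G j h < cc1.
  by move=> j; have := hs j; have := le_maxd (G ^~ 0) j; rewrite /cc1; lra.
have cp : 0 < cc1.
  have := hj (Ordinal n0); have := powR_ge0 (Q (Ordinal n0) h) be; rewrite /G; lra.
have := maxd_lt cp hj; rewrite /cc1; lra.
Qed.

Lemma conv_id (R : realType) n (al r : R) (x : 'I_n -> pt R) (C : pt R) (lam : 'I_n -> R) :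
  (forall j, edist C (x j) = r) -> \sum_(j < n) lam j = 1 ->
  \sum_(j < n) lam j *: Mj al x C j =
  C + ((n.+1%:R)^-1 * r `^ (al - 2)) *:
       \sum_(j < n) lam j *: (x j - C + \sum_(i < n) (x i - C)).
Proof.
move=> hr l1; apply: pt_eqk => k0.
set N := n.+1%:R; set k := r `^ (al - 2).
have hN : N != 0 by rewrite /N pnatr_eq0.
set S := \sum_(i < n) cc k0 (x i - C).
have hxs : forall j, cc k0 (xs al x C j) = cc k0 C + k * cc k0 (x j - C).
  by move=> j; rewrite /xs ccD ccZ hr.
have hsum : \sum_(i < n) cc k0 (xs al x C i) = n%:R * cc k0 C + k * S.
  rewrite (eq_bigr _ (fun i _ => hxs i)) big_split /= sumr_const card_ord.
  by rewrite /S mulr_sumr mulr_natl.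
have eR : cc k0 (\sum_(j < n) lam j *: (x j - C + \sum_(i < n) (x i - C))) =
    \sum_(j < n) lam j * cc k0 (x j - C) + S.
  rewrite cc_sum (eq_bigr (fun j => lam j * cc k0 (x j - C) + lam j * S)); last first.
    by move=> j _; rewrite ccZ ccD cc_sum -/S mulrDr.
  by rewrite big_split /= -mulr_suml l1 mul1r.
have eL : cc k0 (\sum_(j < n) lam j *: Mj al x C j) =
    N^-1 * (N * cc k0 C + k * S) + N^-1 * k * \sum_(j < n) lam j * cc k0 (x j - C).
  rewrite cc_sum (eq_bigr (fun j => lam j * (N^-1 * (N * cc k0 C + k * S)) + N^-1 * k * (lam j * cc k0 (x j - C)))); last first.
    move=> j _; rewrite /Mj ccZ ccZ ccD cc_sum hsum hxs /N -natr1; field.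
    by move: hN; rewrite /N -natr1.
  by rewrite big_split /= -mulr_suml l1 mul1r -mulr_sumr.
rewrite eL ccD ccZ eR; field; by rewrite addrC natr1 pnatr_eq0.
Qed.

Lemma enormN (R : realType) (v : pt R) : enorm (- v) = enorm v.
Proof. by rewrite !enormE !cE !sqrrN. Qed.

Lemma dotDl (R : realType) (u v w : pt R) : dot (v + w) u = dot v u + dot w u.
Proof. by rewrite /dot !cE; ring. Qed.
Lemma dotZl (R : realType) (a : R) (v u : pt R) : dot (a *: v) u = a * dot v u.
Proof. by rewrite /dot !cE; ring. Qed.

Lemma lower_bound (R : realType) n (al r : R) (x : 'I_n -> pt R) (C t : pt R) (lam : 'I_n -> R) :
  (0 < n)%N -> 1 < al -> 0 < r -> (forall j, edist C (x j) = r) ->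
  (forall j, 0 <= lam j) -> \sum_(j < n) lam j = 1 ->
  \sum_(j < n) lam j *: (x j - C + \sum_(i < n) (x i - C)) = 0 ->
  Palpha al x C <= Palpha al x t.
Proof.
move=> n0 al1 r0 hr l0 l1 hV.
set A := r `^ al; set k := r `^ (al - 2); set u := t - C.
pose D j := dot (x j - C) u.
have hf : forall j, A - al * k * D j <= edist t (x j) `^ al.
  move=> j; have hn : enorm (x j - C) = r by rewrite -enormN opprB; exact: hr.
  have := tangent u r0 hn al1.
  have -> : edist t (x j) = enorm (u - (x j - C)) by rewrite /edist /u opprB addrA subrK.
  by [].
have hA : maxd (fun j => edist C (x j) `^ al) = A.
  apply: le_anti; apply/andP; split.
    by apply: maxd_le => [|j]; [exact: powR_ge0 | rewrite hr].
  by have := le_maxd (fun j => edist C (x j) `^ al) (Ordinal n0); rewrite hr.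
have PC : Palpha al x C = n%:R * A + A.
  rewrite /Palpha hA (eq_bigr (fun=> A)); last by move=> j _; rewrite hr.
  by rewrite sumr_const card_ord mulr_natl.
have s1 : n%:R * A - al * k * \sum_(j < n) D j <= \sum_(j < n) edist t (x j) `^ al.
  have -> : n%:R * A - al * k * \sum_(j < n) D j = \sum_(j < n) (A - al * k * D j).
    by rewrite sumrB sumr_const card_ord mulr_natl mulr_sumr.
  by apply: ler_sum => j _; exact: hf.
have s2 : A - al * k * \sum_(j < n) lam j * D j <= \sum_(j < n) lam j * edist t (x j) `^ al.
  have -> : A - al * k * \sum_(j < n) lam j * D j = \sum_(j < n) lam j * (A - al * k * D j).
    rewrite [RHS](eq_bigr (fun j => lam j * A - al * k * (lam j * D j))); last by move=> j _; ring.
    by rewrite sumrB -mulr_suml l1 mul1r mulr_sumr.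
  by apply: ler_sum => j _; apply: ler_wpM2l => //; exact: hf.
have s3 := maxd_conv (fun j => edist t (x j) `^ al) l0 l1.
have hD : \sum_(j < n) D j + \sum_(j < n) lam j * D j = 0.
  have := congr1 (fun v => dot v u) hV; rewrite /= dot_suml.
  rewrite (eq_bigr (fun j => lam j * D j + lam j * dot (\sum_(i < n) (x i - C)) u)); last first.
    by move=> j _; rewrite dotZl dotDl mulrDr.
  rewrite big_split /= -mulr_suml l1 mul1r dot_suml.
  have -> : dot 0 u = 0 by rewrite /dot !cE; ring.
  by move=> H; rewrite addrC.
rewrite PC /Palpha.
have e3 : al * k * (\sum_(j < n) D j + \sum_(j < n) lam j * D j) = 0 by rewrite hD mulr0.
rewrite mulrDr in e3.
lra.
Qed.

Unset Implicit Arguments.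


Theorem proposition5 (R : realType) (alpha : R) (n : nat)
    (x : 'I_n -> pt R) (C s_star : pt R) :
  1 < alpha ->
  (0 < n)%N ->
  injective x ->
  is_one_centre x C ->
  (exists r : R, forall j, edist C (x j) = r) ->
  unique_minimiser alpha x s_star ->
  (s_star = C <-> in_conv (Mj alpha x C) C).
Proof.
move=> al1 n0 _ _ [r hr] [hmin huniq].
have r0 : 0 <= r by rewrite -(hr (Ordinal n0)); exact: sqrtr_ge0.
have fromMin : (forall t, Palpha alpha x C <= Palpha alpha x t) -> s_star = C.
  by move=> h; apply/esym/huniq.
pose N : R := n.+1%:R.
have hN : N != 0 by rewrite /N pnatr_eq0.
have [r00|rpos] := eqVneq r 0.
  have he : forall j, x j - C = 0.
    move=> j; have := hr j; rewrite r00 /edist enormE => /eqP; rewrite sqrtr_eq0 => H.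
    have h0 : c0 (C - x j) = 0 by apply/eqP; rewrite -sqrf_eq0 eq_le sqr_ge0 andbT; nra.
    have h1 : c1 (C - x j) = 0 by apply/eqP; rewrite -sqrf_eq0 eq_le sqr_ge0 andbT; nra.
    by apply: pt_eq; rewrite !cE; move: h0 h1; rewrite !cE; lra.
  have hw : forall j, x j - C + \sum_(i < n) (x i - C) = 0.
    by move=> j; rewrite he big1 ?addr0 // => i _; exact: he.
  split => [_|_].
    exists (fun=> n%:R^-1); split; first by move=> j; rewrite invr_ge0 ler0n.
    have l1 : \sum_(j < n) (n%:R^-1 : R) = 1.
      have nz : (n%:R : R) != 0 by rewrite pnatr_eq0 -lt0n.
      by rewrite sumr_const card_ord -[_ *+ n]mulr_natr mulVf.
    split => //; rewrite (conv_id alpha hr l1) big1 ?scaler0 ?addr0 // => j _.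
    by rewrite hw scaler0.
  apply: fromMin => t.
  have z : forall j, edist C (x j) `^ alpha = 0.
    by move=> j; rewrite hr r00 powR0 // gt_eqF //; lra.
  rewrite /Palpha big1; last by move=> j _; exact: z.
  rewrite add0r (_ : maxd _ = 0); last first.
    apply: le_anti; apply/andP; split; first by apply: maxd_le => // j; rewrite z.
    by have := le_maxd (fun j => edist C (x j) `^ alpha) (Ordinal n0); rewrite z.
  apply: addr_ge0; first by apply: sumr_ge0 => j _; exact: powR_ge0.
  by apply: le_trans (le_maxd _ (Ordinal n0)); exact: powR_ge0.
have rp : 0 < r by rewrite lt_def rpos r0.
split.
  move=> hs; rewrite hs in hmin.
  case: (gordan (fun j => x j - C + \sum_(i < n) (x i - C))) => [[lam [l0 [l1 l2]]]|[d hd]].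
    exists lam; split => //; split => //.
    by rewrite (conv_id alpha hr l1) l2 scaler0 addr0.
  have [t ht] := descent n0 al1 rp hr hd.
  by have := hmin t; rewrite leNgt ht.
move=> [lam [l0 [l1 hC]]]; apply: fromMin => t.
apply: (lower_bound t n0 al1 rp hr l0 l1).
move: hC; rewrite (conv_id alpha hr l1) => hC.
have : (N^-1 * r `^ (alpha - 2)) *: \sum_(j < n) lam j *: (x j - C + \sum_(i < n) (x i - C)) = 0.
  by apply: (@addrI _ C); rewrite addr0 -hC.
move/eqP; rewrite scaler_eq0 => /orP[|/eqP //].
rewrite mulf_eq0 invr_eq0 (negbTE hN) /= => /eqP H.
by have := powR_gt0 (alpha - 2) rp; rewrite H ltxx.
Qed.
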